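(* Let $m<n$, let $\mathbf{p}=(p_1,\ldots,p_n)$ be a probability vector with $p_1\geq\cdots\geq p_n\geq 0$, and let $\mathbf{q}=(q_1,\ldots,q_m)$ be a probability vector with $q_1\geq\cdots\geq q_m\geq 0$. If $\mathbf{p}\preceq\mathbf{q}$, then $R_m(\mathbf{p})\preceq\mathbf{q}$.
   Context: Majorization: for probability vectors $\mathbf{a},\mathbf{b}$, each sorted in nonincreasing order, with the shorter one padded with zeros to equal length, $\mathbf{a}\preceq\mathbf{b}$ means $\sum_{k=1}^i a_k\leq\sum_{k=1}^i b_k$ for all $i$. Definition of $R_m(\mathbf{p})=(r_1,\ldots,r_m)$: if $p_1<1/m$, then $R_m(\mathbf{p})=(1/m,\ldots,1/m)$. If $p_1\geq 1/m$, let $i^*$ be the maximum index $i\in\{1,\ldots,m-1\}$ with $p_i\geq \frac{\sum_{j=i+1}^n p_j}{m-i}$. Then $r_i=p_i$ for $i\leq i^*$ and $r_i=\frac{\sum_{j=i^*+1}^n p_j}{m-i^*}$ for $i=i^*+1,\ldots,m$. *)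

(* Defs.v *)
From HB Require Import structures.
From mathcomp Require Import all_boot all_order all_algebra.
Set Implicit Arguments. Unset Strict Implicit. Unset Printing Implicit Defensive.
Import Order.TTheory GRing.Theory Num.Theory.
Local Open Scope ring_scope.

Definition prob_vec (R : realFieldType) (a : seq R) : Prop :=
  all (fun x => 0 <= x) a /\ \sum_(x <- a) x = 1.

Definition nonincr (R : realFieldType) (a : seq R) : bool := sorted >=%R a.

(* majorization a ⪯ b: sort both nonincreasingly; for every i, the sum of the
   first i entries of a is <= that of b.  (take i on a shorter list takes the
   whole list, which is the same as padding with zeros.) *)
Definition majorized (R : realFieldType) (a b : seq R) : Prop :=
  forall i : nat,
    \sum_(x <- take i (sort >=%R a)) x <= \sum_(x <- take i (sort >=%R b)) x.

(* tail sum  p_{i+1} + ... + p_n  (1-based), i.e. sum of drop i p *)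
Definition tailsum (R : realFieldType) (p : seq R) (i : nat) : R :=
  \sum_(x <- drop i p) x.

(* the condition p_i >= (sum_{j>i} p_j)/(m-i), with 1-based index i *)
Definition istar_cond (R : realFieldType) (m : nat) (p : seq R) (i : nat) : bool :=
  tailsum p i / (m - i)%:R <= p`_i.-1.

(* i* = max i in {1,...,m-1} satisfying the condition (0 if there is none) *)
Definition istar (R : realFieldType) (m : nat) (p : seq R) : nat :=
  (\max_(1 <= i < m | istar_cond m p i) i)%N.

Definition Rm (R : realFieldType) (m : nat) (p : seq R) : seq R :=
  if (p`_0 < 1 / m%:R) || (istar m p == 0)%N then nseq m (1 / m%:R)
  else take (istar m p) p ++
       nseq (m - istar m p) (tailsum p (istar m p) / (m - istar m p)%:R).

(* Main.v *)
Require Import Defs.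
From HB Require Import structures.
From mathcomp Require Import all_boot all_order all_algebra.
From mathcomp Require Import ring lra.
Import Order.TTheory GRing.Theory Num.Theory.
Local Open Scope ring_scope.

Lemma sum_take (R : realFieldType) (s : seq R) (j : nat) :
  \sum_(x <- take j s) x = \sum_(0 <= i < j) s`_i.
Proof.
elim: s j => [|x s IH] j.
  by rewrite big_nil big1 // => i _; rewrite nth_nil.
case: j => [|j]; first by rewrite big_nil big_geq.
by rewrite /= big_cons IH big_nat_recl.
Qed.

Lemma sum_nseq (R : realFieldType) (n : nat) (a : R) :
  \sum_(x <- nseq n a) x = a *+ n.
Proof. by elim: n => [|n IH]; rewrite ?big_nil // big_cons IH mulrS. Qed.

Lemma ge_tr (R : realFieldType) : transitive (>=%R : rel R).
Proof. by move=> y x z /= h1 h2; apply: le_trans h2 h1. Qed.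

Lemma istarP (R : realFieldType) (m : nat) (p : seq R) :
  istar m p = 0%N \/ (istar_cond m p (istar m p) /\ (1 <= istar m p < m)%N).
Proof.
rewrite /istar big_seq_cond.
apply: (big_ind (fun x => x = 0%N \/ (istar_cond m p x /\ (1 <= x < m)%N))).
- by left.
- move=> x y Hx Hy; rewrite /maxn; case: ifP => _; [exact: Hy | exact: Hx].
- move=> i /andP[]; rewrite mem_index_iota => Hi Hc; by right.
Qed.

Theorem lemma4 (R : realFieldType) (m n : nat) (p q : seq R) :
  (m < n)%N ->
  size p = n -> prob_vec p -> nonincr p ->
  size q = m -> prob_vec q -> nonincr q ->
  majorized p q ->
  majorized (Rm m p) q.
Proof.
move=> Hmn Hp [_ Sp] Sortp Hq [_ Sq] Sortq Hmaj.
have m1 : (1 <= m)%N.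
  case: m Hq {Hmn} => // /size0nil Hq0; move: Sq; rewrite Hq0 big_nil => /eqP.
  by rewrite eq_sym oner_eq0.
set k := if (p`_0 < 1 / m%:R) || (istar m p == 0)%N then 0%N else istar m p.
have [km kc] : (k < m)%N /\ ((1 <= k)%N -> istar_cond m p k).
  rewrite /k; case: ifP => [_|/norP[_ /eqP H]]; first by [].
  by case: (istarP R m p) => [//|[? /andP[? ?]]].
set r := tailsum p k / (m - k)%:R.
have Rm_eq : Rm m p = take k p ++ nseq (m - k) r.
  rewrite /Rm /r /k; case: ifP => // _.
  by rewrite take0 cat0s subn0 /tailsum drop0 Sp.
have kn : (k < size p)%N by rewrite Hp; apply: ltn_trans Hmn.
have Hsize : size (Rm m p) = m.
  by rewrite Rm_eq size_cat size_take kn size_nseq subnKC // ltnW.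
have sortRm : sorted >=%R (Rm m p).
  rewrite Rm_eq sorted_pairwise; last exact: ge_tr.
  rewrite pairwise_cat; apply/and3P; split.
  - apply/allrelP => x y /(nthP 0) [i Hi <-] Hy.
    move: Hy; rewrite mem_nseq => /andP[_ /eqP ->].
    rewrite size_take kn in Hi.
    have k1 : (1 <= k)%N by case: (k) Hi.
    rewrite nth_take //= /r.
    apply: le_trans (kc k1) _.
    apply: (sorted_leq_nth (@ge_tr R) (@lexx _ _) 0 Sortp).
    + by rewrite inE (ltn_trans Hi kn).
    + by rewrite inE (leq_ltn_trans (leq_pred k) kn).
    + by rewrite -ltnS prednK.
  - by rewrite -sorted_pairwise ?take_sorted //; exact: ge_tr.
  - rewrite -sorted_pairwise; last exact: ge_tr.
    by elim: (m - k)%N => [|t IH] //=; case: t IH => //= t ->; rewrite lexx.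
move=> j.
rewrite (sorted_sort (@ge_tr R) sortRm) (sorted_sort (@ge_tr R) Sortq).
move: Hmaj; rewrite /majorized (sorted_sort (@ge_tr R) Sortp) (sorted_sort (@ge_tr R) Sortq) => Hmaj.
have Hmaj' i : \sum_(0 <= t < i) p`_t <= \sum_(0 <= t < i) q`_t.
  by rewrite -!sum_take; apply: Hmaj.
rewrite !sum_take.
have nth1 i : (i < k)%N -> (Rm m p)`_i = p`_i.
  by move=> Hi; rewrite Rm_eq nth_cat size_take kn Hi nth_take.
have nth2 i : (k <= i < m)%N -> (Rm m p)`_i = r.
  move=> /andP[H1 H2]; rewrite Rm_eq nth_cat size_take kn ltnNge H1 /=.
  by rewrite nth_nseq ltn_sub2r.
have ra : r * (m - k)%:R = tailsum p k.
  by rewrite /r mulfVK // pnatr_eq0 subn_eq0 -ltnNge.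
have total : \sum_(x <- Rm m p) x = 1.
  rewrite Rm_eq big_cat sum_nseq /= -mulr_natr ra.
  by rewrite /tailsum -big_cat cat_take_drop Sp.
case: (leqP j k) => Hjk.
  rewrite (@eq_big_nat _ _ _ 0 j _ (fun i => p`_i)) ?Hmaj' // => i /andP[_ Hi].
  by rewrite nth1 // (leq_trans Hi Hjk).
case: (leqP m j) => Hjm.
  by rewrite -!sum_take !take_oversize ?Hsize ?Hq // total Sq.
rewrite (big_cat_nat (leq0n k) (ltnW Hjk)) /=.
rewrite (@eq_big_nat _ _ _ 0 k _ (fun i => p`_i)); last first.
  by move=> i /andP[_ Hi]; rewrite nth1.
rewrite (@eq_big_nat _ _ _ k j _ (fun i => r)); last first.
  by move=> i /andP[H1 H2]; rewrite nth2 // H1 (ltn_trans H2 Hjm).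
rewrite sumr_const_nat (big_cat_nat (leq0n k) (ltnW Hjk)) /=.
set Pk := \sum_(0 <= i < k) p`_i.
set Qk := \sum_(0 <= i < k) q`_i.
set d := \sum_(k <= i < j) q`_i.
have HPQ : Pk <= Qk by exact: Hmaj'.
have Q1 : Qk + d + \sum_(j <= i < m) q`_i = 1.
  have Sq' : \sum_(0 <= i < m) q`_i = 1 by rewrite -sum_take take_oversize ?Hq.
  apply: etrans Sq'.
  by rewrite (big_cat_nat (leq0n k) (ltnW (ltn_trans Hjk Hjm)))
     (big_cat_nat (ltnW Hjk) (ltnW Hjm)) /= addrA.
set e := \sum_(j <= i < m) q`_i in Q1.
have P1 : Pk + tailsum p k = 1.
  by rewrite /Pk -sum_take /tailsum -big_cat cat_take_drop Sp.
set c0 := q`_(j.-1).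
have j1 : (j.-1 < m)%N by rewrite (leq_ltn_trans (leq_pred j)).
have Hd : c0 *+ (j - k) <= d.
  rewrite -sumr_const_nat; apply: ler_sum_nat => i /andP[H1 H2].
  apply: (sorted_leq_nth (@ge_tr R) (@lexx _ _) 0 Sortq).
  + by rewrite inE Hq (leq_ltn_trans _ j1) // -ltnS prednK // (leq_ltn_trans _ H2).
  + by rewrite inE Hq.
  + by rewrite -ltnS prednK // (leq_ltn_trans _ H2).
have He : e <= c0 *+ (m - j).
  rewrite -sumr_const_nat; apply: ler_sum_nat => i /andP[H1 H2].
  apply: (sorted_leq_nth (@ge_tr R) (@lexx _ _) 0 Sortq).
  + by rewrite inE Hq.
  + by rewrite inE Hq.
  + by rewrite (leq_trans (leq_pred j)).
have Habc : (m - k)%:R = (j - k)%:R + (m - j)%:R :> R.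
  by rewrite -natrD addnC addnBA ?subnK ?(ltnW Hjk) ?(ltnW Hjm).
move: Hd He ra; rewrite -(mulr_natr c0 (j - k)) -(mulr_natr c0 (m - j)).
rewrite -(mulr_natr r (j - k)) Habc.
set b := (j - k)%:R; set c := (m - j)%:R => Hd He ra.
have b0 : 0 <= b by rewrite ler0n.
have c0p : 0 < c by rewrite ltr0n subn_gt0.
have h1 : 0 <= c * (Qk - Pk) by rewrite mulr_ge0 // subr_ge0.
have h2 : b * e <= b * (c0 * c) by rewrite ler_wpM2l.
have h3 : c * (c0 * b) <= c * d by rewrite ler_wpM2l // ltW.
have a0 : 0 < b + c by rewrite ltr_wpDl.
rewrite -(ler_pM2r a0).
have -> : (Pk + r * b) * (b + c) = Pk * (b + c) + b * (r * (b + c)) by ring.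
rewrite ra.
have -> : tailsum p k = Qk + d + e - Pk by move: P1 Q1; lra.
have key : b * e <= c * d.
  apply: le_trans h2 _; apply: le_trans _ h3; rewrite le_eqVlt; apply/orP; left.
  by apply/eqP; ring.
rewrite -subr_ge0.
have -> : (Qk + d) * (b + c) - (Pk * (b + c) + b * (Qk + d + e - Pk))
  = c * (Qk - Pk) + (c * d - b * e) by ring.
by rewrite addr_ge0 // subr_ge0.
Qed.
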